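(* Let $\varepsilon>0$, let $T\in\mathbb{R}$, and let $\{f_i\}_{i\in\mathbb{N}}$ be real-valued queries on datasets such that each $f_i$ is 1-sensitive (i.e. $|f_i(D)-f_i(D')|\le 1$ for all neighboring $D,D'$) and the family has unidirectional sensitivity: for all neighboring datasets $D,D'$, if $f_i(D)>f_i(D')$ for some $i$, then there is no $j$ with $f_j(D)<f_j(D')$. Consider UDSAboveThreshold: on input $D$, sample $\hat T\gets T+\mathrm{Lap}(2/\varepsilon)$; then for $i=1,2,\dots$, sample a fresh $\nu_i\sim\mathrm{Lap}(2/\varepsilon)$; if $f_i(D)+\nu_i\ge\hat T$, output $a_i=\top$ and halt; otherwise output $a_i=\bot$ and continue. Then UDSAboveThreshold (whose output is the stream $a_1,a_2,\dots$) is $\varepsilon$-differentially private.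
   Context: $\mathrm{Lap}(b)$ is the Laplace distribution with mean $0$ and scale $b$, density $\frac{1}{2b}e^{-|x|/b}$; all Laplace samples are independent. Two datasets are neighboring if they differ by replacing the contribution of one individual. A randomized algorithm $M$ is $\varepsilon$-differentially private if for every pair of neighboring datasets $D,D'$ and every set of outcomes $S$, $\Pr[M(D)\in S]\le e^{\varepsilon}\Pr[M(D')\in S]$. *)

(* Defs.v *)
From HB Require Import structures.
From mathcomp Require Import all_boot all_order all_algebra.
From mathcomp Require Import all_classical all_reals all_analysis.
Set Implicit Arguments. Unset Strict Implicit. Unset Printing Implicit Defensive.
Import Order.TTheory GRing.Theory Num.Theory.
Local Open Scope classical_set_scope.
Local Open Scope ring_scope.

(* Two datasets are neighboring if they have the same size and differ in at
   most one position (the contribution of one individual is replaced). *)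
Definition neighboring (X : Type) (D D' : seq X) : Prop :=
  size D = size D' /\
  exists i : nat, forall j : nat, j <> i -> onth D j = onth D' j.

Definition laplace_pdf (R : realType) (b : R) (x : R) : R :=
  (2 * b)^-1 * expR (- (`|x| / b)).

Definition laplace_rv d (Om : measurableType d) (R : realType)
  (P : probability Om R) (b : R) (X : Om -> R) : Prop :=
  measurable_fun setT X /\
  forall B : set R, measurable B ->
    P (X @^-1` B) = (\int[lebesgue_measure]_(x in B) (laplace_pdf b x)%:E)%E.

Definition mutually_independent d (Om : measurableType d) (R : realType)
  (P : probability Om R) (I : eqType) (X : I -> Om -> R) : Prop :=
  forall (J : seq I) (B : I -> set R), uniq J ->
    (forall i, i \in J -> measurable (B i)) ->
    P (\big[setI/setT]_(i <- J) (X i @^-1` B i)) =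
    (\prod_(i <- J) P (X i @^-1` B i))%E.

Definition one_sensitive (X : Type) (R : realType) (g : seq X -> R) : Prop :=
  forall D D', neighboring D D' -> `|g D - g D'| <= 1.

Definition unidirectional (X : Type) (R : realType) (f : nat -> seq X -> R) : Prop :=
  forall D D', neighboring D D' ->
    (exists i, f i D' < f i D) -> ~ (exists j, f j D < f j D').

(* The randomness: Z (threshold noise, so that
   That = T + Z with Z ~ Lap(2/eps)) and nu i (noise of the i-th query,
   i = 0,1,2,... corresponding to the paper's i = 1,2,3,...). *)
Definition uds_test (X : Type) (Om : Type) (R : realType)
  (f : nat -> seq X -> R) (T : R) (Z : Om -> R) (nu : nat -> Om -> R)
  (D : seq X) (w : Om) (i : nat) : bool :=
  T + Z w <= f i D + nu i w.

(* Output stream: a_k = Some true (top, then halt), Some false (bot),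
   None (no output: the algorithm halted at an earlier step). *)
Definition uds_above_threshold (X : Type) (Om : Type) (R : realType)
  (f : nat -> seq X -> R) (T : R) (Z : Om -> R) (nu : nat -> Om -> R)
  (D : seq X) (w : Om) : nat -> option bool :=
  fun k => if [exists i : 'I_k, uds_test f T Z nu D w i] then None
           else Some (uds_test f T Z nu D w k).

(* Main.v *)
Require Import Defs.
From HB Require Import structures.
From mathcomp Require Import all_boot all_order all_algebra.
From mathcomp Require Import all_classical all_reals all_analysis.
From mathcomp Require Import measurable_realfun lra.
Import Order.TTheory GRing.Theory Num.Theory.
Local Open Scope classical_set_scope.
Local Open Scope ring_scope.

Definition shiftR {R : realType} (s : R) : measurableTypeR R -> measurableTypeR R := fun x => x + s.

Lemma shift_mfun (R : realType) (s : R) : measurable_fun [set: measurableTypeR R] (shiftR s).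
Proof. by apply: measurable_realfun.measurable_funD. Qed.

HB.instance Definition _ (R : realType) (s : R) :=
  isMeasurableFun.Build _ _ _ _ (shiftR s) (@shift_mfun R s).

Section Shift.
Variable R : realType.
Local Notation mu := (@lebesgue_measure R).

Lemma shift_preimage_itv (s a b : R) :
  shiftR s @^-1` `]a, b]%classic = `]a - s, b - s]%classic.
Proof.
apply/seteqP; split => x /=; rewrite /shiftR !in_itv /= => /andP[h1 h2]; apply/andP; split.
- by rewrite ltrBlDr.
- by rewrite lerBrDr.
- by rewrite -ltrBlDr.
- by rewrite -lerBrDr.
Qed.

Lemma lebesgue_shift (s : R) A : measurable A ->
  pushforward mu (shiftR s) A = mu A.
Proof.
move=> mA; apply/esym/lebesgue_measure_unique => //= X /ocitvP [->|[[a b] /= ab ->]].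
  by rewrite /pushforward preimage_set0.
rewrite /pushforward shift_preimage_itv !lebesgue_measure_itv /= !lte_fin ltrD2r ab.
by congr (_%:E); rewrite opprB addrA subrK.
Qed.
End Shift.

Section Lap.
Variable R : realType.
Local Notation mu := (@lebesgue_measure R).

Lemma pdf_mfun (b : R) (D : set R) : measurable_fun D (fun x : R => (laplace_pdf b x)%:E).
Proof.
apply/measurable_EFinP; rewrite /laplace_pdf.
apply: measurable_funM => //.
apply: measurableT_comp; first exact: measurable_expR.
apply: measurableT_comp => //.
by apply: measurable_funM => //.
Qed.

Lemma pdf_shift_mfun (b t : R) (D : set R) : measurable_fun D (fun x : R => (laplace_pdf b (x + t))%:E).
Proof.
apply/measurable_EFinP; rewrite /laplace_pdf.
apply: measurable_funM => //.
apply: measurableT_comp; first exact: measurable_expR.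
apply: measurableT_comp => //.
apply: measurable_funM => //.
apply: measurableT_comp => //.
exact: measurable_funD.
Qed.

Lemma pdf_ge0 (b : R) x : 0 < b -> 0 <= laplace_pdf b x.
Proof.
move=> b0; rewrite /laplace_pdf mulr_ge0 // ?expR_ge0 // invr_ge0 mulr_ge0 // ltW //.
Qed.

Lemma pdf_shift (b t x : R) : 0 < b ->
  laplace_pdf b (x + t) <= expR (`|t| / b) * laplace_pdf b x.
Proof.
move=> b0; rewrite /laplace_pdf mulrCA ler_pM2l ?invr_gt0 ?mulr_gt0 //.
rewrite -expRD ler_expR -mulNr -mulNr -mulrDl ler_pM2r ?invr_gt0 //.
have := ler_normB (x + t) t; rewrite addrK => h.
lra.
Qed.

Lemma laplace_shift d (Om : measurableType d) (P : probability Om R) (b : R) (X : Om -> R)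
  (t : R) (B B' : set R) : 0 < b -> laplace_rv P b X ->
  measurable B -> measurable B' -> (forall x, B (x + t) -> B' x) ->
  (P (X @^-1` B) <= (expR (`|t| / b))%:E * P (X @^-1` B'))%E.
Proof.
move=> b0 [mX hX] mB mB' hBB'.
rewrite hX // hX //.
have mBs : measurable (shiftR t @^-1` B).
  by rewrite -[X in measurable X]setTI; apply: shift_mfun.
rewrite (eq_measure_integral (pushforward mu (shiftR t))); last first.
  move=> A mA _; symmetry; apply: lebesgue_shift; exact: mA.
rewrite ge0_integral_pushforward //; last 2 first.
  exact: pdf_mfun.
  by move=> y _; rewrite lee_fin pdf_ge0.
rewrite -ge0_integralZl //.
apply: (@le_trans _ _ (\int[mu]_(x in shiftR t @^-1` B) ((expR (`|t| / b))%:E * (laplace_pdf b x)%:E))%E).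
  apply: ge0_le_integral => //.
  - by move=> y _; rewrite lee_fin pdf_ge0.
  - exact: pdf_shift_mfun.
  - apply: measurable_funeM. exact: pdf_mfun.
  - by move=> y _; rewrite /= /shiftR -EFinM lee_fin pdf_shift.
apply: ge0_subset_integral => //.
- apply: measurable_funeM. exact: pdf_mfun.
- by move=> y _; rewrite -EFinM lee_fin mulr_ge0 ?expR_ge0 ?pdf_ge0.
- exact: pdf_mfun.
- by move=> y _; rewrite lee_fin pdf_ge0.
Qed.

End Lap.

Lemma in_bigcap (T : Type) (I : eqType) (s : seq I) (F : I -> set T) (w : T) :
  (\big[setI/setT]_(i <- s) F i) w <-> (forall i, i \in s -> F i w).
Proof.
elim: s => [|x s IH]; first by rewrite big_nil; split.
rewrite big_cons; split.
- move=> [Fx /IH H] i; rewrite in_cons => /orP[/eqP ->//|]; exact: H.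
- move=> H; split; first by apply: H; rewrite mem_head.
  by apply/IH => i iS; apply: H; rewrite in_cons iS orbT.
Qed.

Lemma prod_le (I : eqType) (R : realType) (s : seq I) (x y : I -> \bar R) (k : I -> R) :
  (forall i, (0 <= x i)%E) -> (forall i, 0 <= k i) ->
  (forall i, i \in s -> (x i <= (k i)%:E * y i)%E) ->
  (\prod_(i <- s) x i <= (\prod_(i <- s) k i)%:E * \prod_(i <- s) y i)%E.
Proof.
move=> x0 k0; elim: s => [|i s IH] xy; first by rewrite !big_nil mul1e.
rewrite !big_cons EFinM muleACA.
apply: lee_pmul => //; first exact: prode_ge0.
- by apply: xy; rewrite mem_head.
- by apply: IH => j js; apply: xy; rewrite in_cons js orbT.
Qed.

Definition zig (m : nat) : int := if odd m then Negz (m./2) else Posz (m./2).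
Definition unzig (z : int) : nat := match z with Posz k => k.*2 | Negz k => k.*2.+1 end.

Lemma zigK : cancel zig unzig.
Proof.
move=> m; rewrite /zig; have := odd_double_half m.
by case: (odd m) => /= h; rewrite -{2}h.
Qed.

Lemma unzigK : cancel unzig zig.
Proof.
case=> k /=; rewrite /zig.
  by rewrite odd_double doubleK.
by rewrite /= odd_double /= uphalf_double.
Qed.

Lemma zig_inj : injective zig. Proof. exact: can_inj zigK. Qed.

Section Cells.
Variable R : realType.

Definition cellZ (dl : R) (m : nat) : R := (zig m)%:~R * dl.

Lemma cell_cover (dl x : R) : 0 < dl -> exists m, cellZ dl m <= x < cellZ dl m + dl.
Proof.
move=> dl0; exists (unzig (Num.floor (x / dl))); rewrite /cellZ unzigK.
have /andP[h1 h2] := floor_itv (x / dl).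
rewrite -ler_pdivlMr // h1 /=.
have -> : (Num.floor (x / dl))%:~R * dl + dl = (Num.floor (x / dl) + 1)%:~R * dl.
  by rewrite intrD mulrDl mul1r.
by rewrite -ltr_pdivrMr.
Qed.

Lemma cell_disj (dl x : R) m m' : 0 < dl ->
  cellZ dl m <= x < cellZ dl m + dl -> cellZ dl m' <= x < cellZ dl m' + dl -> m = m'.
Proof.
move=> dl0 hm hm'; apply: zig_inj.
have fl k : cellZ dl k <= x < cellZ dl k + dl -> Num.floor (x / dl) = zig k.
  move=> /andP[h1 h2]; apply: floor_def.
  rewrite intrD ler_pdivlMr // h1 /= ltr_pdivrMr // mulrDl mul1r.
  exact: h2.
by rewrite -(fl _ hm) -(fl _ hm').
Qed.
End Cells.
Arguments cellZ {R}.
Arguments cell_cover {R}.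
Arguments cell_disj {R}.

Lemma lim_dl_real (R : realType) (x y c k : R) : 0 <= x -> 0 <= y -> 0 < k ->
  (forall dl, 0 < dl -> x <= expR (c + k * dl) * y) -> x <= expR c * y.
Proof.
move=> x0 y0 k0 H; apply/ler_addgt0Pr => e e0.
pose u := e / (x + 1).
have u0 : 0 < u by rewrite divr_gt0 // ltr_wpDl.
have h := H (u / k) (divr_gt0 u0 k0).
rewrite [k * _]mulrC divfK ?gt_eqF // expRD in h.
have h2 : 1 - u <= expR (- u) by have := expR_ge1Dx (- u).
have h3 : x * (1 - u) <= expR c * y.
  apply: (le_trans (ler_wpM2l x0 h2)).
  have -> : expR c * y = expR c * expR u * y * expR (- u).
    by rewrite -!mulrA; congr (_ * _); rewrite mulrCA -expRD subrr expR0 mulr1.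
  by rewrite ler_wpM2r // expR_ge0.
have h4 : x * u <= e.
  rewrite /u mulrCA ger_pMr //; first by rewrite ler_pdivrMr ?ltr_wpDl // mul1r lerDl.
have : x <= expR c * y + x * u by move: h3; rewrite mulrBr mulr1 lerBlDr.
move=> h5; apply: (le_trans h5); by rewrite lerD2l.
Qed.

Lemma lim_dl (R : realType) (x y : \bar R) (c k : R) : (0 <= x)%E -> (0 <= y)%E ->
  x \is a fin_num -> y \is a fin_num -> 0 < k ->
  (forall dl : R, 0 < dl -> (x <= (expR (c + k * dl))%:E * y)%E) -> (x <= (expR c)%:E * y)%E.
Proof.
move=> x0 y0 /fineK <- /fineK <- k0 H.
rewrite -EFinM lee_fin; apply: (@lim_dl_real R (fine x) (fine y) c k).
- exact: fine_ge0.
- exact: fine_ge0.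
- exact: k0.
- by move=> dl dl0; rewrite -lee_fin EFinM; exact: H.
Qed.

Section Core.
Variables (R : realType) (d : measure_display) (Om : measurableType d) (P : probability Om R).
Variables (b : R) (Z : Om -> R) (nu : nat -> Om -> R).
Hypothesis b0 : 0 < b.
Hypothesis hZ : laplace_rv P b Z.
Hypothesis hnu : forall i, laplace_rv P b (nu i).
Definition Xf (o : option nat) := match o with None => Z | Some i => nu i end.
Hypothesis hind : mutually_independent P Xf.

Lemma hX o : laplace_rv P b (Xf o). Proof. by case: o. Qed.

Lemma mX o : measurable_fun setT (Xf o). Proof. by case: (hX o). Qed.

Definition Jn n := None :: map Some (index_iota 0 n.+1).

Lemma Jn_uniq n : uniq (Jn n).
Proof.
rewrite /Jn cons_uniq (map_inj_uniq (@Some_inj _)) iota_uniq andbT.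
by apply/mapP => -[].
Qed.

Definition Bs (l u : R) (n : nat) (top : bool) (c : nat -> R) (o : option nat) : set R :=
  match o with
  | None => `[l, u[%classic
  | Some i => if (i < n)%N then `]-oo, c i[%classic else if top then `[c i, +oo[%classic else setT
  end.

Lemma Bs_meas l u n top c o : measurable (Bs l u n top c o).
Proof. case: o => [i|] /=; last exact: measurable_itv.
by case: ifP => _; [exact: measurable_itv| case: top => //; exact: measurable_itv].
Qed.

Definition Rect l u n top c : set Om :=
  \big[setI/setT]_(o <- Jn n) (Xf o @^-1` Bs l u n top c o).

Lemma Rect_mem l u n top c w : Rect l u n top c w <->
  [/\ l <= Z w < u, (forall i, (i < n)%N -> nu i w < c i) & (top -> c n <= nu n w)].
Proof.
rewrite /Rect in_bigcap; split.
- move=> H; split.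
  + by have := H None (mem_head _ _); rewrite /= in_itv /= => /andP[-> ->].
  + move=> i lin; have : Some i \in Jn n.
      by rewrite /Jn in_cons (mem_map (@Some_inj _)) mem_index_iota /= ltnS ltnW.
    by move/H; rewrite /= lin /= in_itv.
  + move=> tp; have : Some n \in Jn n.
      by rewrite /Jn in_cons (mem_map (@Some_inj _)) mem_index_iota /= ltnS.
    by move/H; rewrite /= ltnn tp /= in_itv /= andbT.
- move=> [hz hl ht] [i|] /=; last by rewrite in_itv /=.
  rewrite /Jn in_cons (mem_map (@Some_inj _)) mem_index_iota /= ltnS => iln.
  case: ifP => [lin|]; first by rewrite /= in_itv /=; exact: hl.
  move/negbT; rewrite -leqNgt => nli.
  have -> : i = n by apply/eqP; rewrite eqn_leq iln nli.
  case: top ht => // ht; rewrite /= in_itv /= andbT; exact: ht.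
Qed.

Lemma Rect_meas l u n top c : measurable (Rect l u n top c).
Proof.
rewrite /Rect; elim: (Jn n) => [|o s IH]; first by rewrite big_nil.
rewrite big_cons; apply: measurableI => //.
by rewrite -[X in measurable X]setTI; apply: mX => //; exact: Bs_meas.
Qed.

Lemma Rect_prod l u n top c : P (Rect l u n top c) =
  (\prod_(o <- Jn n) P (Xf o @^-1` Bs l u n top c o))%E.
Proof. by apply: hind; [exact: Jn_uniq| move=> o _; exact: Bs_meas]. Qed.


Definition cup (l : R) (n : nat) (a : nat -> R) (dl : R) (i : nat) : R :=
  if (i < n)%N then l + dl + a i else l + a i.
Definition clo (l : R) (n : nat) (a : nat -> R) (s dl : R) (i : nat) : R :=
  if (i < n)%N then l + s + a i else l + s + dl + a i.

Definition tsh (n : nat) (top : bool) (s dl : R) (o : option nat) : R :=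
  match o with
  | None => - s
  | Some i => if (i < n)%N then dl else if top then - (1 + dl) else 0
  end.

Lemma tsh_sum n top s dl : 0 <= s -> 0 <= dl ->
  \sum_(o <- Jn n) `|tsh n top s dl o| <= s + 1 + n.+1%:R * dl.
Proof.
move=> s0 dl0; rewrite /Jn big_cons big_map /= normrN ger0_norm // -addrA lerD2l.
rewrite big_nat_recr //= ltnn.
rewrite (eq_big_nat _ _ (F2 := fun=> dl)); last by move=> i /andP[_ ->]; rewrite ger0_norm.
rewrite sumr_const_nat subn0 -[n.+1]addn1 natrD mulrDl mul1r.
rewrite -mulr_natl.
case: top => /=.
  by rewrite normrN ger0_norm ?addr_ge0 //; lra.
by rewrite normr0; lra.
Qed.

Lemma Rect_cmp (l s dl : R) (n : nat) (top : bool) (a a' : nat -> R) : 0 <= s -> 0 < dl ->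
  (forall i, (i < n)%N -> a i <= a' i + s) -> (top -> a' n + s <= a n + 1) ->
  (P (Rect l (l + dl) n top (cup l n a dl)) <=
   (expR ((s + 1 + n.+1%:R * dl) / b))%:E *
     P (Rect (l + s) (l + s + dl) n top (clo l n a' s dl)))%E.
Proof.
move=> s0 dl0 ha htop.
rewrite !Rect_prod.
apply: le_trans.
  apply: (@prod_le _ _ _ _ _ (fun o => expR (`|tsh n top s dl o| / b))).
  - by move=> o; exact: measure_ge0.
  - by move=> o; exact: expR_ge0.
  - move=> o oJ; apply: (@laplace_shift R d Om P b (Xf o) (tsh n top s dl o)
       (Bs l (l+dl) n top (cup l n a dl) o) (Bs (l+s) (l+s+dl) n top (clo l n a' s dl) o)) => //;
     [exact: hX|exact: Bs_meas|exact: Bs_meas|].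
    case: o oJ => [i|] oJ x /=; last first.
      rewrite !in_itv /= => /andP[h1 h2]; apply/andP; split; lra.
    rewrite /cup /clo; case: ifP => lin.
      rewrite lin /= !in_itv /= => h1; have := ha i lin; lra.
    rewrite lin; case: top htop => // htop.
    have -> : i = n.
      move: oJ; rewrite /Jn in_cons (mem_map (@Some_inj _)) mem_index_iota /= ltnS => iln.
      by apply/eqP; rewrite eqn_leq iln leqNgt lin.
    rewrite /= !in_itv /= !andbT => h1; have := htop erefl; lra.
apply: lee_wpmul2r; first exact: prode_ge0.
rewrite lee_fin -expR_sum ler_expR -mulr_suml ler_pM2r ?invr_gt0 //.
by apply: tsh_sum => //; exact: ltW.
Qed.


Definition Ev (n : nat) (top : bool) (a : nat -> R) : set Om :=
  [set w | (forall i, (i < n)%N -> nu i w < Z w + a i) /\ (top -> Z w + a n <= nu n w)].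

Lemma meas_lt (f g : Om -> R) (c : R) : measurable_fun setT f -> measurable_fun setT g ->
  measurable [set w | f w < g w + c].
Proof.
move=> mf mg.
have -> : [set w | f w < g w + c] = setT `&` ((f \- g) @^-1` `]-oo, c[%classic).
  by apply/seteqP; split => w /=; rewrite in_itv /=; lra.
by apply: measurable_funB => //; exact: measurable_itv.
Qed.

Lemma meas_le (f g : Om -> R) (c : R) : measurable_fun setT f -> measurable_fun setT g ->
  measurable [set w | g w + c <= f w].
Proof.
move=> mf mg.
have -> : [set w | g w + c <= f w] = setT `&` ((f \- g) @^-1` `[c, +oo[%classic).
  by apply/seteqP; split => w /=; rewrite in_itv /= andbT; lra.
by apply: measurable_funB => //; exact: measurable_itv.
Qed.

Lemma Ev_meas n top a : measurable (Ev n top a).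
Proof.
have -> : Ev n top a = (\big[setI/setT]_(i <- index_iota 0 n) [set w | nu i w < Z w + a i])
    `&` (if top then [set w | Z w + a n <= nu n w] else setT).
  apply/seteqP; split => w /=.
  - move=> [h1 h2]; split; first by apply/in_bigcap => i; rewrite mem_index_iota => /andP[_ /h1].
    by case: top h2 => // h2; apply: h2.
  - move=> [/in_bigcap h1 h2]; split.
      by move=> i lin; apply: h1; rewrite mem_index_iota lin.
    by case: top h2.
apply: measurableI.
  elim: (index_iota 0 n) => [|i s IH]; first by rewrite big_nil.
  by rewrite big_cons; apply: measurableI => //; apply: meas_lt; [exact: (mX (Some i))|exact: (mX None)].
case: top => //; apply: meas_le; [exact: (mX (Some n))|exact: (mX None)].
Qed.


Lemma core_le (n : nat) (top : bool) (a a' : nat -> R) (s dl : R) : 0 <= s -> 0 < dl ->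
  (forall i, (i < n)%N -> a i <= a' i + s) -> (top -> a' n + s <= a n + 1) ->
  (P (Ev n top a) <= (expR ((s + 1 + n.+1%:R * dl) / b))%:E * P (Ev n top a'))%E.
Proof.
move=> s0 dl0 ha htop.
pose up m := Rect (cellZ dl m) (cellZ dl m + dl) n top (cup (cellZ dl m) n a dl).
pose lo m := Rect (cellZ dl m + s) (cellZ dl m + s + dl) n top (clo (cellZ dl m) n a' s dl).
have h1 : (P (Ev n top a) <= \sum_(0 <= m <oo) P (up m))%E.
  apply: measure_sigma_subadditive => //; first by move=> m; exact: Rect_meas.
    exact: Ev_meas.
  move=> w [hl ht]; have [m /andP[c1 c2]] := cell_cover dl (Z w) dl0.
  exists m => //; apply/Rect_mem; split.
  - by rewrite c1 c2.
  - by move=> i lin; rewrite /cup lin; have := hl i lin; lra.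
  - by move=> tp; rewrite /cup ltnn; have := ht tp; lra.
have h2 : (\sum_(0 <= m <oo) P (lo m) = P (\bigcup_m lo m))%E.
  apply/esym/measure_semi_bigcup.
  - by move=> m; exact: Rect_meas.
  - apply/trivIsetP => m m' _ _ mm'; apply/seteqP; split => // w [].
    move=> /Rect_mem [/andP[c1 c2] _ _] /Rect_mem [/andP[c1' c2'] _ _].
    have := cell_disj dl (Z w - s) m m' dl0.
    move=> H; have e : m = m' by apply: H; apply/andP; split; lra.
    by move: mm'; rewrite e eqxx.
  - by apply: bigcup_measurable => m _; exact: Rect_meas.
have h3 : (P (\bigcup_m lo m) <= P (Ev n top a'))%E.
  apply: le_measure; rewrite ?inE.
  - by apply: bigcup_measurable => m _; exact: Rect_meas.
  - exact: Ev_meas.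
  move=> w [m _ /Rect_mem [/andP[c1 c2] hl ht]]; split.
  - by move=> i lin; have := hl i lin; rewrite /clo lin; lra.
  - by move=> tp; have := ht tp; rewrite /clo ltnn; lra.
apply: (le_trans h1).
apply: le_trans.
  apply: (@lee_nneseries _ _ (fun m => (expR ((s + 1 + n.+1%:R * dl) / b))%:E * P (lo m))%E).
  - by move=> m _ _; exact: measure_ge0.
  - by move=> m _; exact: Rect_cmp.
rewrite nneseriesZl; last by move=> m _; exact: measure_ge0.
apply: lee_wpmul2l; first by rewrite lee_fin expR_ge0.
by rewrite h2.
Qed.

End Core.


Section Main.
Variables (R : realType) (d : measure_display) (Om : measurableType d) (P : probability Om R).
Variables (X : Type) (eps T : R) (f : nat -> seq X -> R) (Z : Om -> R) (nu : nat -> Om -> R).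
Hypothesis eps0 : 0 < eps.
Hypothesis hsens : forall i, one_sensitive (f i).
Hypothesis hud : unidirectional f.
Hypothesis hZ : laplace_rv P (2 / eps) Z.
Hypothesis hnu : forall i, laplace_rv P (2 / eps) (nu i).
Hypothesis hind : mutually_independent P (Xf R d Om Z nu).
Variables (D D' : seq X).
Hypothesis hnb : neighboring D D'.

Let b0 : 0 < 2 / eps. Proof. by rewrite divr_gt0. Qed.

Let evm n top a : measurable (Ev R d Om Z nu n top a) :=
  @Ev_meas R d Om P (2/eps) Z nu hZ hnu n top a.

Let aa (E : seq X) (i : nat) : R := T - f i E.

Lemma dir : (forall i, f i D' <= f i D) \/ (forall i, f i D <= f i D').
Proof.
case: (pselect (exists i, f i D' < f i D)) => h; [left|right] => i.
  rewrite leNgt; apply/negP => hlt; apply: (hud D D' hnb h); by exists i.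
by rewrite leNgt; apply/negP => hlt; apply: h; exists i.
Qed.

Lemma ev_bound n top :
  (P (Ev R d Om Z nu n top (aa D)) <= (expR eps)%:E * P (Ev R d Om Z nu n top (aa D')))%E.
Proof.
have sens i : `|f i D - f i D'| <= 1 by apply: hsens.
have ge0 A : measurable A -> (0 <= P A)%E by move=> _; exact: measure_ge0.
have fin A : measurable A -> P A \is a fin_num.
  move=> mA; rewrite ge0_fin_numE ?measure_ge0 //.
  by apply: (le_lt_trans (probability_le1 P mA)); rewrite ltry.
apply: (@lim_dl R _ _ eps (n.+1%:R / (2 / eps))).
- exact: measure_ge0.
- exact: measure_ge0.
- by apply: fin; exact: evm.
- by apply: fin; exact: evm.
- by rewrite divr_gt0.
move=> dl dl0.
have key : forall s, 0 <= s <= 1 ->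
    (forall i, (i < n)%N -> aa D i <= aa D' i + s) -> (top -> aa D' n + s <= aa D n + 1) ->
    (P (Ev R d Om Z nu n top (aa D)) <= (expR (eps + n.+1%:R / (2 / eps) * dl))%:E * P (Ev R d Om Z nu n top (aa D')))%E.
  move=> s /andP[s0 s1] h1 h2.
  apply: (le_trans (@core_le R d Om P (2/eps) Z nu b0 hZ hnu hind n top (aa D) (aa D') s dl s0 dl0 h1 h2)).
  apply: lee_wpmul2r; first exact: measure_ge0.
  rewrite lee_fin ler_expR.
  have bpos := b0.
  move: bpos; set b := 2 / eps => bpos.
  have -> : eps = 2 / b by rewrite /b invf_div mulrC divfK ?gt_eqF.
  rewrite mulrAC -mulrDl ler_pM2r ?invr_gt0 //; lra.
have hD i : `|f i D - f i D'| <= 1 by apply: hsens.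
case: dir => hdir.
- apply: (key 0); first by rewrite lexx ler01.
  + by move=> i _; rewrite /aa addr0 lerD2l lerN2 hdir.
  + by move=> _; rewrite /aa addr0; have := hD n; rewrite ler_norml; lra.
- apply: (key 1); first by rewrite ler01 lexx.
  + by move=> i _; rewrite /aa; have := hD i; rewrite ler_norml; lra.
  + by move=> _; rewrite /aa; have := hdir n; lra.
Qed.

Let Hk (E : seq X) (k : nat) := Ev R d Om Z nu k true (aa E).
Let Hinf (E : seq X) := \bigcap_n Ev R d Om Z nu n false (aa E).
Let sk (k : nat) : nat -> option bool :=
  fun j => if (j < k)%N then Some false else if j == k then Some true else None.
Let sinf : nat -> option bool := fun _ => Some false.

Lemma test_false E w i : uds_test f T Z nu E w i = false <-> nu i w < Z w + aa E i.
Proof.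
rewrite /uds_test /aa; split; first by move/negbT; rewrite -ltNge; lra.
by move=> h; apply/negbTE; rewrite -ltNge; lra.
Qed.

Lemma test_true E w i : uds_test f T Z nu E w i = true <-> Z w + aa E i <= nu i w.
Proof. by rewrite /uds_test /aa; split => h; lra. Qed.

Lemma out_Hk E k w : Hk E k w -> uds_above_threshold f T Z nu E w = sk k.
Proof.
move=> [hl /(_ erefl) ht]; apply/funext => j; rewrite /uds_above_threshold /sk.
have hf i : (i < k)%N -> uds_test f T Z nu E w i = false by move=> ik; apply/test_false/hl.
have htt : uds_test f T Z nu E w k = true by apply/test_true.
case: ltngtP => jk.
- case: existsP => [[i hi]|_]; last by rewrite hf.
  by rewrite hf // in hi; rewrite (ltn_trans (ltn_ord i) jk).
- case: existsP => // -[]; by exists (Ordinal jk).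
- case: existsP => [[i hi]|_]; last by rewrite jk htt.
  by rewrite hf // -jk in hi.
Qed.

Lemma out_Hinf E w : Hinf E w -> uds_above_threshold f T Z nu E w = sinf.
Proof.
move=> h.
have hf i : uds_test f T Z nu E w i = false.
  by apply/test_false; have [] := h i.+1 I; move=> /(_ i (ltnSn i)).
apply/funext => j; rewrite /uds_above_threshold /sinf hf.
by case: existsP => // -[i]; rewrite hf.
Qed.

Lemma out_cover E w : (exists k, Hk E k w) \/ Hinf E w.
Proof.
case: (pselect (exists i, uds_test f T Z nu E w i)) => [ex|nex].
- left; case: (ex_minnP ex) => k hk hmin; exists k; split => [i ik|_].
    apply/test_false; apply/negbTE/negP => hi.
    by have := hmin _ hi; rewrite leqNgt ik.
  exact/test_true.
- right => n _; split => // i _; apply/test_false; apply/negbTE/negP => hi.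
  by apply: nex; exists i.
Qed.

Lemma Hk_disj E k k' w : Hk E k w -> Hk E k' w -> k = k'.
Proof.
move=> [hl /(_ erefl) ht] [hl' /(_ erefl) ht'].
case: (ltngtP k k') => // kk.
- by have := hl' _ kk => h; exfalso; lra.
- by have := hl _ kk => h; exfalso; lra.
Qed.

Lemma Hk_Hinf E k w : Hk E k w -> Hinf E w -> False.
Proof.
move=> [_ /(_ erefl) ht] h; have [] := h k.+1 I.
by move=> /(_ k (ltnSn k)); lra.
Qed.

Variable S : set (nat -> option bool).

Let G (E : seq X) (m : nat) : set Om :=
  match m with
  | 0 => [set w | S sinf /\ Hinf E w]
  | k.+1 => [set w | S (sk k) /\ Hk E k w]
  end.

Lemma pre_G E : uds_above_threshold f T Z nu E @^-1` S = \bigcup_m G E m.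
Proof.
apply/seteqP; split => w /=.
- move=> hS; case: (out_cover E w) => [[k hk]|hi].
    by exists k.+1 => //=; split => //; rewrite -(@out_Hk _ _ _ hk).
  by exists 0%N => //=; split => //; rewrite -(@out_Hinf _ _ hi).
- case=> -[|k] _ /= [hS h]; first by rewrite (@out_Hinf _ _ h).
  by rewrite (@out_Hk _ _ _ h).
Qed.

Lemma G_triv E : trivIset setT (G E).
Proof.
apply/trivIsetP => m m' _ _ mm'; apply/seteqP; split => // w [].
case: m mm' => [|k]; case: m' => [|k'] //= mm' [_ h1] [_ h2].
- exact: (@Hk_Hinf _ _ _ h2 h1).
- exact: (@Hk_Hinf _ _ _ h1 h2).
- by move: mm'; rewrite (@Hk_disj _ _ _ _ h1 h2) eqxx.
Qed.

Lemma Hinf_meas E : measurable (Hinf E).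
Proof. by apply: bigcapT_measurable => n; exact: evm. Qed.

Lemma G_meas E m : measurable (G E m).
Proof.
case: m => [|k] /=.
- case: (pselect (S sinf)) => h.
    have -> : [set w | S sinf /\ Hinf E w] = Hinf E by apply/seteqP; split => w //= [].
    exact: Hinf_meas.
  have -> : [set w | S sinf /\ Hinf E w] = set0 by apply/seteqP; split => w //= [].
  by [].
- case: (pselect (S (sk k))) => h.
    have -> : [set w | S (sk k) /\ Hk E k w] = Hk E k by apply/seteqP; split => w //= [].
    exact: evm.
  have -> : [set w | S (sk k) /\ Hk E k w] = set0 by apply/seteqP; split => w //= [].
  by [].
Qed.

Lemma setPand (A : Prop) (B : set Om) : A -> [set w | A /\ B w] = B.
Proof. by move=> a; apply/seteqP; split => w //= [].  Qed.

Lemma setPand0 (A : Prop) (B : set Om) : ~ A -> [set w | A /\ B w] = set0.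
Proof. by move=> a; apply/seteqP; split => w //= []. Qed.

Lemma Hinf_bound : (P (Hinf D) <= (expR eps)%:E * P (Hinf D'))%E.
Proof.
pose F E n := Ev R d Om Z nu n false (aa E).
have Fdec E : {homo F E : n m / (n <= m)%N >-> (m <= n)%O}.
  move=> n m nm; apply/subsetPset => w [hl _]; split => // i im.
  by apply: hl; exact: leq_trans im nm.
have cv : (P \o F D') n @[n --> \oo] --> P (\bigcap_n F D' n).
  apply: nonincreasing_cvg_mu.
  - by apply: (le_lt_trans (probability_le1 P (evm _ _ _))); rewrite ltry.
  - by move=> n; exact: evm.
  - by apply: bigcapT_measurable => n; exact: evm.
  - exact: Fdec.
have key : ((expR (- eps))%:E * P (Hinf D) <= P (Hinf D'))%E.
  rewrite /Hinf -(cvg_lim _ cv) //.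
  apply: lime_ge; first by apply: cvgP cv.
  apply: nearW => n /=.
  apply: (@le_trans _ _ ((expR (- eps))%:E * P (F D n))%E).
    apply: lee_wpmul2l; first by rewrite lee_fin expR_ge0.
    apply: le_measure; rewrite ?inE; [exact: Hinf_meas|exact: evm|].
    by move=> w h; apply: h.
  apply: (@le_trans _ _ ((expR (- eps))%:E * ((expR eps)%:E * P (F D' n)))%E).
    apply: lee_wpmul2l; first by rewrite lee_fin expR_ge0.
    exact: ev_bound.
  by rewrite muleA -EFinM -expRD addNr expR0 mul1e.
have -> : P (Hinf D) = ((expR eps)%:E * ((expR (- eps))%:E * P (Hinf D)))%E.
  by rewrite muleA -EFinM -expRD subrr expR0 mul1e.
apply: lee_wpmul2l => //; by rewrite lee_fin expR_ge0.
Qed.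

Lemma G_bound m : (P (G D m) <= (expR eps)%:E * P (G D' m))%E.
Proof.
case: m => [|k] /=.
- case: (pselect (S sinf)) => h.
    by rewrite !setPand //; exact: Hinf_bound.
  by rewrite !setPand0 // measure0 mule0.
- case: (pselect (S (sk k))) => h.
    by rewrite !setPand //; exact: ev_bound.
  by rewrite !setPand0 // measure0 mule0.
Qed.

Lemma main_le : (P (uds_above_threshold f T Z nu D @^-1` S)
     <= (expR eps)%:E * P (uds_above_threshold f T Z nu D' @^-1` S))%E.
Proof.
rewrite !pre_G !measure_semi_bigcup //; try exact: G_meas; try exact: G_triv;
  try by apply: bigcup_measurable => m _; exact: G_meas.
rewrite -nneseriesZl; last by move=> m _; exact: measure_ge0.
apply: lee_nneseries; first by move=> m _ _; exact: measure_ge0.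
by move=> m _; exact: G_bound.
Qed.

End Main.

Theorem theorem4p1 (R : realType) (d : measure_display) (Om : measurableType d)
  (P : probability Om R) (X : Type) (eps T : R) (f : nat -> seq X -> R)
  (Z : Om -> R) (nu : nat -> Om -> R) :
  0 < eps ->
  (forall i, one_sensitive (f i)) ->
  unidirectional f ->
  laplace_rv P (2 / eps) Z ->
  (forall i, laplace_rv P (2 / eps) (nu i)) ->
  mutually_independent P (fun o : option nat =>
                            match o with None => Z | Some i => nu i end) ->
  forall (D D' : seq X), neighboring D D' ->
  forall S : set (nat -> option bool),
    (P (uds_above_threshold f T Z nu D @^-1` S)
     <= (expR eps)%:E * P (uds_above_threshold f T Z nu D' @^-1` S))%E.
Proof.
move=> eps0 hsens hud hZ hnu hind D D' hnb S.
exact: (@main_le R d Om P X eps T f Z nu eps0 hsens hud hZ hnu hind D D' hnb S).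
Qed.
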